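(* Let $q$ be an odd prime power, $d$ a positive integer, and $\varphi_d$ the coloring defined below. If $s_1,\dots,s_t \in (\mathbb{F}_q^* )^d$ form a $t$-falling star under $\varphi_d$ (with the labeling in the definition below), then $s_1,\dots,s_{t-1}$ are linearly independent. Consequently, for every nonempty finite subset $T \subseteq (\mathbb{F}_q^* )^d$, $\mathrm{rk}(T) \ge \mathrm{FS}(T) - 1$. Moreover, if there exist a vector $v \in (\mathbb{F}_q^* )^d\setminus T$ and a color $\gamma$ with $\varphi_d(v,x)=\gamma$ for all $x \in T$, then $\mathrm{rk}(T) \ge \mathrm{FS}(T)$.
   Context: $\mathbb{F}_q^*$ is the set of nonzero elements of $\mathbb{F}_q$, endowed with an arbitrary fixed linear order; $(\mathbb{F}_q^* )^d$ is ordered lexicographically with respect to it. Let $C_d = \mathrm{DOT} \sqcup \mathrm{ZERO}\sqcup\mathrm{UP}\sqcup\mathrm{DOWN}$, where $\mathrm{DOT} = \mathbb{F}_q^*$ and ZERO, UP, DOWN are three disjoint copies of $\{1,\dots,d\}\times \mathbb{F}_q$. For distinct $x<y$ in $(\mathbb{F}_q^* )^d$, let $i$ be the first coordinate where $x$ and $y$ differ, and $x\cdot y$ the standard dot product; $\varphi_d(x,y)=\varphi_d(y,x)$ is $(i,x_i+y_i)$ in ZERO if $x\cdot y=0$; $(i,x_i+y_i)$ in UP if $x\cdot y\ne 0$ and $x\cdot y=x\cdot x$; $(i,x_i+y_i)$ in DOWN if $x\cdot y\notin\{0,x\cdot x\}$ and $x\cdot y=y\cdot y$; and $x\cdot y\in\mathrm{DOT}$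 otherwise. Distinct vectors $s_1,\dots,s_t$ form a $t$-falling star under $\varphi_d$ if there are colors $\alpha_2,\dots,\alpha_t$ with $\varphi_d(s_i,s_j) = \alpha_i$ for all $1 \le j < i \le t$. $\mathrm{FS}(T)$ is the maximum $t$ such that $T$ contains a $t$-falling star. $\mathrm{rk}(T)$ is the dimension of the linear span of $T$. *)

(* Defs.v *)
From HB Require Import structures.
From mathcomp Require Import all_boot all_order all_algebra.
From mathcomp Require Import boolp.
Set Implicit Arguments. Unset Strict Implicit. Unset Printing Implicit Defensive.
Import GRing.Theory.
Local Open Scope ring_scope.

Section Defs.
Variables (F : finFieldType) (d : nat).

(* Colors C_d = DOT ⊔ ZERO ⊔ UP ⊔ DOWN, DOT = F_q^x, the others {1..d} x F_q *)
Inductive color :=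
  | Dot of F
  | Zero of 'I_d & F
  | Up of 'I_d & F
  | Down of 'I_d & F.

(* vectors of (F_q)^d are row vectors; (F_q^x)^d = all entries nonzero *)
Definition nzvec (x : 'rV[F]_d) : bool := [forall i, x 0 i != 0].

Definition dot (x y : 'rV[F]_d) : F := \sum_(i < d) x 0 i * y 0 i.

Definition firstdiff (x y : 'rV[F]_d) : option 'I_d :=
  [pick i : 'I_d | (x 0 i != y 0 i) &&
                   [forall j : 'I_d, (j < i)%N ==> (x 0 j == y 0 j)]].

(* lt : the fixed linear (strict) order on F_q^x; (F_q^x)^d is ordered
   lexicographically, so for x <> y the smaller one is the one with the
   lt-smaller entry at the first differing coordinate. *)
Definition phi (lt : rel F) (x y : 'rV[F]_d) : color :=
  match firstdiff x y with
  | None => Dot 0 (* x = y: unused junk value *)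
  | Some i =>
      let a := if lt (x 0 i) (y 0 i) then x else y in
      let b := if lt (x 0 i) (y 0 i) then y else x in
      let c := x 0 i + y 0 i in
      if dot a b == 0 then Zero i c
      else if dot a b == dot a a then Up i c
      else if dot a b == dot b b then Down i c
      else Dot (dot a b)
  end.

(* s_1..s_t (indexed 0..t-1) form a t-falling star *)
Definition falling_star (lt : rel F) (t : nat) (s : 'I_t -> 'rV[F]_d) : Prop :=
  injective s /\ (forall i, nzvec (s i)) /\
  exists alpha : 'I_t -> color,
    forall i j : 'I_t, (j < i)%N -> phi lt (s i) (s j) = alpha i.

Definition star_in (lt : rel F) (T : {set 'rV[F]_d}) (t : nat) : Prop :=
  exists s : 'I_t -> 'rV[F]_d, falling_star lt s /\ forall i, s i \in T.

Definition FS (lt : rel F) (T : {set 'rV[F]_d}) : nat :=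
  \max_(t < #|T|.+1 | `[< star_in lt T t >]) t.

Definition rk (T : {set 'rV[F]_d}) : nat := \dim <<enum T>>%VS.

End Defs.

Definition linear_order_on_units (F : finFieldType) (lt : rel F) : Prop :=
  [/\ forall a, ~~ lt a a,
      forall a b c, lt a b -> lt b c -> lt a c &
      forall a b, a != 0 -> b != 0 -> a != b -> lt a b || lt b a].

(* Main.v *)
Require Import Defs.
From HB Require Import structures.
From mathcomp Require Import all_boot all_order all_algebra.
From mathcomp Require Import boolp.
Import GRing.Theory.
Local Open Scope ring_scope.
Set Implicit Arguments. Unset Strict Implicit.

Section Aux.
Variables (F : finFieldType) (d : nat) (lt : rel F).
Implicit Types x y u : 'rV[F]_d.

Definition colinfo x y (col : color F d) : Prop :=
  match col with
  | Defs.Dot e => dot x y = e /\ e != 0 /\ e != dot x x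
  | Zero p e | Up p e | Down p e => x 0 p != y 0 p /\ x 0 p + y 0 p = e
  end.

Lemma dotC x y : dot x y = dot y x.
Proof. by apply: eq_bigr => i _; rewrite mulrC. Qed.

Lemma firstdiff_some x y : x != y -> firstdiff x y != None.
Proof.
move=> nxy; rewrite /firstdiff; case: pickP => // H; exfalso.
have E : forall n (i : 'I_d), (i < n)%N -> x 0 i == y 0 i.
  elim=> [//|n IH] i; rewrite ltnS leq_eqVlt => /orP[/eqP ein|]; last exact: IH.
  have := H i; rewrite /= => /negbT; rewrite negb_and negbK => /orP[//|/forallPn[j]].
  by rewrite negb_imply ein => /andP[/IH ->].
move/eqP: nxy; apply; apply/rowP => i.
apply/eqP; exact: (E i.+1).
Qed.

Lemma phi_info x y : x != y -> colinfo x y (phi lt x y).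
Proof.
move=> nxy; have := firstdiff_some nxy; rewrite /phi.
case E: firstdiff => [i|] // _.
move: E; rewrite /firstdiff; case: pickP => // j /andP[nij _] [<-].
case: (boolP (lt (x 0 j) (y 0 j))) => _; rewrite ?[dot y x]dotC.
- case: ifP => H1 /=; first by split.
  case: ifP => H2 /=; first by split.
  by case: ifP => H3 /=; [split| rewrite H1 H2].
- case: ifP => H1 /=; first by split.
  case: ifP => H2 /=; first by split.
  by case: ifP => H3 /=; [split| rewrite H1 H3].
Qed.


Lemma dot_sum u m (c : 'I_m -> F) (v : 'I_m -> 'rV[F]_d) :
  dot u (\sum_(i < m) c i *: v i) = \sum_(i < m) c i * dot u (v i).
Proof.
rewrite /dot.
under eq_bigr => j _ do rewrite summxE mulr_sumr.
rewrite exchange_big; apply: eq_bigr => i _; rewrite mulr_sumr.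
by apply: eq_bigr => j _; rewrite mxE mulrCA.
Qed.

Lemma coord_sum0 m (c : 'I_m -> F) (v : 'I_m -> 'rV[F]_d) p :
  (\sum_(i < m) c i *: v i) 0 p = \sum_(i < m) c i * v i 0 p.
Proof. by rewrite summxE; apply: eq_bigr => i _; rewrite mxE. Qed.

Lemma sum_one m (c : 'I_m -> F) (f : 'I_m -> F) (x v : F) :
  v != 0 -> x = v -> (forall i, f i = v) -> x = \sum_i c i * f i ->
  \sum_i c i = 1.
Proof.
move=> nv -> Hf; under eq_bigr => i _ do rewrite Hf.
rewrite -mulr_suml => /esym/eqP; rewrite -{2}[v]mul1r.
by rewrite (can2_eq (mulfK nv) (divfK nv)) mulfK // => /eqP.
Qed.

Lemma key (w : nat -> 'rV[F]_d) u k :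
  (forall j, (j <= k)%N -> nzvec (w j)) ->
  (forall j, (j < k)%N -> w k != w j) ->
  (forall j, (j <= k)%N -> u != w j) ->
  (exists a, forall j, (j < k)%N -> phi lt (w k) (w j) = a) ->
  (exists b, forall j, (j <= k)%N -> phi lt u (w j) = b) ->
  w k \notin <<map w (iota 0 k)>>%VS.
Proof.
move=> nz dis du [a Ha] [b Hb]; apply/negP => Hin.
set X := map w (iota 0 k).
have sX : size X = k by rewrite size_map size_iota.
have [c Hw] : exists c : 'I_(size X) -> F, w k = \sum_i c i *: X`_i.
  by exists (fun i => coord (in_tuple X) i (w k)); exact: (coord_span (X := in_tuple X)).
have Xi : forall i : 'I_(size X), X`_i = w i.
  move=> i; have hi := ltn_ord i; rewrite {2}sX in hi.
  by rewrite (nth_map 0%N) ?size_iota // nth_iota.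
have ltk : forall i : 'I_(size X), (i < k)%N by move=> i; rewrite -sX.
move: Hw; under eq_bigr => i _ do rewrite Xi; move=> Hw.
have S1 : \sum_i c i = 1.
  have Hbi := fun j (hj : (j <= k)%N) => phi_info (du j hj).
  case: b Hb => [e|p e|p e|p e] Hb.
  - have := Hbi k (leqnn k); rewrite Hb // => -[He1 [He2 _]].
    apply: (sum_one (f := fun i : 'I_(size X) => dot u (w i)) (x := dot u (w k)) He2 He1).
      by move=> i; have := Hbi i (ltnW (ltk i)); rewrite Hb; [case|exact: ltnW (ltk i)].
    by rewrite {1}Hw dot_sum.
  1-3: have He : forall j, (j <= k)%N -> w j 0 p = e - u 0 p by
         move=> j hj; have := Hbi j hj; rewrite Hb // => -[_ <-]; rewrite addrC addKr.
  1-3: have nzk : e - u 0 p != 0 by rewrite -(He k) //; have := nz k (leqnn k) => /forallP.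
  1-3: apply: (sum_one (f := fun i : 'I_(size X) => w i 0 p) (x := w k 0 p) nzk (He k (leqnn k)));
    [by move=> i; rewrite He // ltnW | by rewrite {1}Hw coord_sum0].
have [k0|kpos] := posnP k.
  move: S1; rewrite big1; first by move=> /esym/eqP; rewrite oner_eq0.
  by move=> i; have := ltk i; rewrite k0.
have Hai := fun j (hj : (j < k)%N) => phi_info (dis j hj).
case: a Ha => [e|p e|p e|p e] Ha.
- have := Hai 0%N kpos; rewrite Ha // => -[He1 [_ He3]].
  move/negP: He3; apply; apply/eqP.
  have Hd : forall j, (j < k)%N -> dot (w k) (w j) = e.
    by move=> j hj; have := Hai j hj; rewrite Ha // => -[].
  rewrite {2}Hw dot_sum; under eq_bigr => i _ do rewrite Hd ?ltk //.
  by rewrite -mulr_suml S1 mul1r.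
all: have He : forall j, (j < k)%N -> w j 0 p = e - w k 0 p /\ w k 0 p != w j 0 p by
       move=> j hj; have := Hai j hj; rewrite Ha // => -[? <-]; split=> //; rewrite addrC addKr.
all: have [E0 N0] := He 0%N kpos.
all: move/negP: N0; apply; apply/eqP; rewrite E0.
all: rewrite {1}Hw coord_sum0; under eq_bigr => i _ do rewrite (proj1 (He i (ltk i))).
all: by rewrite -mulr_suml S1 mul1r.
Qed.

Lemma free_iota (w : nat -> 'rV[F]_d) n :
  (forall k, (k < n)%N -> w k \notin <<map w (iota 0 k)>>%VS) ->
  free (map w (iota 0 n)).
Proof.
elim: n => [|n IH] H; first by rewrite /= nil_free.
have -> : iota 0 n.+1 = iota 0 n ++ [:: n] by rewrite -addn1 iotaD.
rewrite map_cat (perm_free (permEl (perm_catC _ _))) /= free_cons.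
by rewrite H // IH // => k hk; rewrite H // ltnW.
Qed.

Lemma star_free t' (s : 'I_t'.+1 -> 'rV[F]_d) alpha (v : 'rV[F]_d) n :
  injective s -> (forall i, nzvec (s i)) ->
  (forall i j : 'I_t'.+1, (j < i)%N -> phi lt (s i) (s j) = alpha i) ->
  (n <= t'.+1)%N ->
  (n = t'.+1 -> (forall i, v != s i) /\ exists g, forall i, phi lt v (s i) = g) ->
  free (map (fun j => if (j < t'.+1)%N then s (inord j) else v) (iota 0 n)).
Proof.
move=> inj nz Hs hn Hv; apply: free_iota => k hk.
set w := fun j => _.
have wE : forall j, (j < t'.+1)%N -> w j = s (inord j) by move=> j hj; rewrite /w hj.
have hkt : (k < t'.+1)%N by apply: leq_trans hk hn.
have ne : forall i j, (i < t'.+1)%N -> (j < t'.+1)%N -> i != j -> s (inord i) != s (inord j).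
  move=> i j hi hj nij; apply/eqP => /inj /(congr1 (@nat_of_ord _)); rewrite !inordK // => eij.
  by rewrite eij eqxx in nij.
apply: (key (u := w k.+1)).
- by move=> j hj; rewrite wE ?(leq_ltn_trans hj hkt).
- move=> j hj; rewrite !wE ?(ltn_trans hj hkt) //; apply: ne => //; first exact: ltn_trans hj hkt.
  by rewrite gtn_eqF.
- move=> j hj; have hjt := leq_ltn_trans hj hkt; rewrite (wE j) //.
  case: (ltnP k.+1 t'.+1) => hk1.
    by rewrite wE //; apply: ne => //; rewrite gtn_eqF // ltnS.
  have en : n = t'.+1 by apply/eqP; rewrite eqn_leq hn; apply: leq_trans hk1 hk.
  by rewrite /w ltnNge hk1 /=; case: (Hv en).
- exists (alpha (inord k)) => j hj; rewrite !wE ?(ltn_trans hj hkt) //.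
  by apply: Hs; rewrite !inordK // (ltn_trans hj hkt).
- case: (ltnP k.+1 t'.+1) => hk1.
    exists (alpha (inord k.+1)) => j hj; rewrite !wE ?(leq_ltn_trans hj hkt) //.
    have hjt := leq_ltn_trans hj hkt; by apply: Hs; rewrite !inordK ?ltnS.
  have en : n = t'.+1 by apply/eqP; rewrite eqn_leq hn; apply: leq_trans hk1 hk.
  have [_ [g Hg]] := Hv en; exists g => j hj.
  by rewrite /w ltnNge hk1 /= (leq_ltn_trans hj hkt).
Qed.

Lemma free_le_rk (X : seq 'rV[F]_d) (T : {set 'rV[F]_d}) :
  free X -> {subset X <= T} -> (size X <= rk T)%N.
Proof.
move=> /eqP <- sub; apply: dimvS; apply: sub_span => x /sub; by rewrite mem_enum.
Qed.
End Aux.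

Lemma seq_eq (F : finFieldType) (d : nat) t' (s : 'I_t'.+1 -> 'rV[F]_d) :
  [seq s i | i : 'I_t'.+1 <- enum 'I_t'.+1 & (i < t'.+1.-1)%N] =
  map (fun j => if (j < t'.+1)%N then s (inord j) else s ord0) (iota 0 t').
Proof.
have -> : [seq s i | i : 'I_t'.+1 <- enum 'I_t'.+1 & (i < t'.+1.-1)%N] =
  map (fun j => if (j < t'.+1)%N then s (inord j) else s ord0)
    (map (@nat_of_ord _) [seq i <- enum 'I_t'.+1 | (nat_of_ord i < t')%N]).
  by rewrite -map_comp; apply: eq_map => i /=; rewrite ltn_ord inord_val.
congr map.
have -> : [seq nat_of_ord i | i <- [seq i <- enum 'I_t'.+1 | (nat_of_ord i < t')%N]] =
  [seq x <- map (@nat_of_ord _) (enum 'I_t'.+1) | (x < t')%N] by rewrite filter_map.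
rewrite val_enum_ord.
have -> : iota 0 t'.+1 = iota 0 t' ++ [:: t'] by rewrite -addn1 iotaD.
rewrite filter_cat /= ltnn cats0; apply/all_filterP/allP => x.
by rewrite mem_iota.
Qed.

Theorem corollary3p5 (F : finFieldType) (d : nat) (lt : rel F) :
  odd #|F| -> (0 < d)%N -> linear_order_on_units lt ->
  [/\ (forall (t : nat) (s : 'I_t -> 'rV[F]_d), falling_star lt s ->
         free [seq s i | i : 'I_t <- enum 'I_t & (i < t.-1)%N]),
      (forall T : {set 'rV[F]_d}, T != set0 -> {subset T <= nzvec (d:=d)} ->
         (FS lt T - 1 <= rk T)%N) &
      (forall T : {set 'rV[F]_d}, T != set0 -> {subset T <= nzvec (d:=d)} ->
         forall (v : 'rV[F]_d) (gamma : color F d),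
           nzvec v -> v \notin T -> (forall x, x \in T -> phi lt v x = gamma) ->
           (FS lt T <= rk T)%N)].
Proof.
move=> _ _ _.
have P1 : forall (t : nat) (s : 'I_t -> 'rV[F]_d), falling_star lt s ->
         free [seq s i | i : 'I_t <- enum 'I_t & (i < t.-1)%N].
  move=> [|t'] s [inj [nz [alpha Hs]]].
    have -> : enum 'I_0 = [::] by apply/size0nil; rewrite size_enum_ord.
    by rewrite /= nil_free.
  rewrite seq_eq; apply: (@star_free _ _ lt t' s alpha (s ord0) t' inj nz Hs (leqnSn _)).
  by move/n_Sn.
split.
- exact: P1.
- move=> T _ _; rewrite leq_subLR; apply/bigmax_leqP => t.
  move: (nat_of_ord t) => n /asboolP [s [st sT]].
  case: n s st sT => [//|t'] s st sT.
  have fr := P1 _ _ st; rewrite seq_eq in fr.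
  have := free_le_rk fr; rewrite size_map size_iota add1n ltnS; apply.
  by move=> x /mapP [j _ ->]; case: ifP.

- move=> T _ _ v g nzv vT Hv; apply/bigmax_leqP => t.
  move: (nat_of_ord t) => n /asboolP [s [[inj [nz [alpha Hs]]] sT]].
  case: n s alpha inj nz Hs sT => [//|t'] s alpha inj nz Hs sT.
  have Hv' : t'.+1 = t'.+1 -> (forall i, v != s i) /\ exists g0, forall i, phi lt v (s i) = g0.
    by split; [move=> i; apply: contraNneq vT => ->; exact: sT | exists g => i; exact: Hv].
  have fr := @star_free _ _ lt t' s alpha v t'.+1 inj nz Hs (leqnn _) Hv'.
  rewrite -[t'.+1](size_iota 0) -(size_map (fun j => if (j < t'.+1)%N then s (inord j) else v)).
  apply: free_le_rk fr _ => x /mapP [j]; rewrite mem_iota /= => hj ->.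
  by rewrite hj.
Qed.
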